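(* Let $G$ be a $4$-connected simple graph on seven vertices. Then $G$ does not contain $W_6$ as a minor if and only if $G$ has no vertex of degree $6$.
   Context: $W_6$ is the wheel obtained by joining a single new vertex to all vertices of a cycle of length $6$. A minor is obtained by a sequence of edge deletions and edge contractions (parallel edges arising from contractions are reduced to single edges). *)

(* Defs.v *)
(* Simple graphs on a finType T are symmetric irreflexive
   boolean relations e : rel T. *)
From mathcomp Require Import all_boot.
Set Implicit Arguments. Unset Strict Implicit. Unset Printing Implicit Defensive.

Definition connected_in (T : finType) (e : rel T) (A : {set T}) : Prop :=
  forall x y, x \in A -> y \in A ->
    connect (fun u v => [&& u \in A, v \in A & e u v]) x y.

Definition k_connected (T : finType) (e : rel T) (k : nat) : Prop :=
  k < #|T| /\ forall S : {set T}, #|S| < k -> connected_in e (~: S).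

Definition degree (T : finType) (e : rel T) (x : T) : nat := #|[set y | e x y]|.

Definition has_minor (T : finType) (e : rel T) (S : finType) (h : rel S) : Prop :=
  exists B : S -> {set T},
    [/\ forall s, B s != set0,
        forall s t, s != t -> [disjoint B s & B t],
        forall s, connected_in e (B s) &
        forall s t, h s t -> exists x y, [/\ x \in B s, y \in B t & e x y]].

(* The wheel W_6: hub 0, rim vertices 1..6 forming the cycle 1-2-3-4-5-6-1. *)
Definition wheel6 : rel 'I_7 := fun i j =>
  (i != j) &&
  [|| (val i == 0), (val j == 0),
      ((val i + 6 - val j) %% 6 == 1) | ((val j + 6 - val i) %% 6 == 1)].

(* Main.v *)
Require Import Defs.
From mathcomp Require Import all_boot.
From mathcomp Require Import zify.
From Stdlib Require Import FunctionalExtensionality.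

Definition nrm (a : nat -> nat -> bool) i j := [&& i != j, i < 6, j < 6 & a i j].
Definition mindegR (r : nat -> nat -> bool) :=
  all (fun i => 3 <= count (r i) (iota 0 6)) (iota 0 6).
Definition cyc_ok (r : nat -> nat -> bool) (c : seq nat) := match c with
 [:: c0; c1; c2; c3; c4; c5] =>
   [&& r c0 c1, r c1 c2, r c2 c3, r c3 c4, r c4 c5 & r c5 c0]
 | _ => false end.
Definition cycs := Eval vm_compute in [seq 0 :: c | c <- permutations (iota 1 5)].
Definition hamR r := has (cyc_ok r) cycs.
Definition tab := [:: [:: 0;0;1;2;3;4]; [:: 0;0;5;6;7;8]; [:: 0;0;0;9;10;11];
  [:: 0;0;0;0;12;13]; [:: 0;0;0;0;0;14]].
Definition code i j :=
  if i < j then nth 0 (nth [::] tab i) j else nth 0 (nth [::] tab j) i.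
Definition Aof (l : seq bool) i j := nth false l (code i j).
Fixpoint blists n : seq (seq bool) :=
  if n is n'.+1 then [seq b :: l | b <- [:: true; false], l <- blists n']
  else [:: [::]].

Lemma check6 :
  all (fun l => mindegR (nrm (Aof l)) ==> hamR (nrm (Aof l))) (blists 15).
Proof. vm_cast_no_check (erefl true). Qed.

Lemma blists_mem n l : size l = n -> l \in blists n.
Proof.
elim: n l => [|n IH] [|b l] //= [] /IH H.
by case: b; rewrite !mem_cat map_f ?orbT.
Qed.

Lemma key6 (a : nat -> nat -> bool) :
  (forall i j, a i j = a j i) -> mindegR (nrm a) -> hamR (nrm a).
Proof.
move=> sa.
pose l := [:: a 0 1; a 0 2; a 0 3; a 0 4; a 0 5; a 1 2; a 1 3; a 1 4; a 1 5;
  a 2 3; a 2 4; a 2 5; a 3 4; a 3 5; a 4 5].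
have E : nrm (Aof l) = nrm a.
  apply: functional_extensionality => i; apply: functional_extensionality => j.
  rewrite /nrm.
  case: i => [|[|[|[|[|[|i]]]]]]; case: j => [|[|[|[|[|[|j]]]]]] => //=; by rewrite sa.
have := allP check6 l (@blists_mem 15 l erefl).
by rewrite E => /implyP.
Qed.

Lemma no_out (T : finType) (r : rel T) v z :
  (forall w, ~~ r v w) -> connect r v z -> z = v.
Proof.
move=> H /connectP [[|u p]] /=; first by move=> _ ->.
by case/andP=> h; rewrite (negbTE (H u)) in h.
Qed.

Lemma min_deg4 (T : finType) (e : rel T) :
  irreflexive e -> #|T| = 7 -> k_connected e 4 -> forall v, 4 <= degree e v.
Proof.
move=> irr card7 [_ kc] v; rewrite leqNgt; apply/negP => lt.
have cn := kc [set y | e v y] lt.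
have vS : v \in ~: [set y | e v y] by rewrite !inE irr.
have : 1 < #|~: [set y | e v y]|.
  have := cardsC [set y | e v y]; rewrite card7 /degree in lt *; lia.
case/card_gt1P => [y [z [yS zS yz]]].
have [w [wS wv]] : exists w, w \in ~: [set y | e v y] /\ w != v.
  case: (eqVneq y v) => [eyv|nyv]; last by exists y.
  by exists z; split; rewrite // -eyv eq_sym.
have H : w = v.
  apply: (@no_out _ _ v w _ (cn v w vS wS)) => u.
  by rewrite !inE; apply/and3P => [[_ /negP nu eu]].
by rewrite H eqxx in wv.
Qed.

Lemma minor_deg6 (T : finType) (e : rel T) :
  irreflexive e -> #|T| = 7 -> has_minor e wheel6 -> exists x, degree e x = 6.
Proof.
move=> irr card7 [B [ne dj _ ed]].
have pk : forall k, exists y, y \in B k by move=> k; apply/set0Pn.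
pose r k := xchoose (pk k).
have rB : forall k, r k \in B k by move=> k; exact: xchooseP.
have rinj : injective r.
  move=> k1 k2 eq; apply/eqP; apply/negPn/negP => ne12.
  by have := disjointFr (dj _ _ ne12) (rB k1); rewrite eq rB.
have inB : forall k y, y \in B k -> y = r k.
  move=> k y yB.
  have /codomP [k' ey] : y \in codom r by apply: inj_card_onto; rewrite // card_ord card7.
  subst y; case: (eqVneq k' k) => [-> //|nk].
  by have := disjointFr (dj _ _ nk) (rB k'); rewrite yB.
exists (r ord0).
have hub : forall t, t != ord0 -> e (r ord0) (r t).
  move=> t nt; have w : wheel6 ord0 t by rewrite /wheel6 eq_sym nt.
  case: (ed _ _ w) => [u [y [uB yB euy]]].
  by rewrite -(inB _ _ uB) -(inB _ _ yB).
rewrite /degree; apply/eqP; rewrite eqn_leq; apply/andP; split.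
  have : [set y | e (r ord0) y] \subset [set~ r ord0].
    apply/subsetP => y; rewrite !inE => h; apply/eqP => ey.
    by rewrite ey irr in h.
  by move/subset_leq_card; rewrite cardsC1 card7.
have : [set r t | t in [set~ ord0]] \subset [set y | e (r ord0) y].
  apply/subsetP => y /imsetP [t nt ->]; rewrite inE hub //.
  by move: nt; rewrite !inE.
by move/subset_leq_card; rewrite card_imset // cardsC1 card_ord.
Qed.

Lemma deg6_minor (T : finType) (e : rel T) :
  symmetric e -> irreflexive e -> #|T| = 7 -> (forall v, 4 <= degree e v) ->
  forall x, degree e x = 6 -> has_minor e wheel6.
Proof.
move=> sym irr card7 d4 x dx; rewrite /degree in dx.
have hx : forall y, y != x -> e x y.
  have sub : [set y | e x y] \subset [set~ x].
    apply/subsetP => y; rewrite !inE => h; apply/eqP => ey.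
    by rewrite ey irr in h.
  have cA : #|[set y | e x y]| = #|[set~ x]| by rewrite cardsC1 card7 dx.
  have E := elimT (subset_cardP cA) sub.
  by move=> y ny; have := E y; rewrite !inE ny.
pose s := enum [set~ x].
have ss : size s = 6 by rewrite -cardE cardsC1 card7.
have us : uniq s := enum_uniq _.
have ns : forall i, i < 6 -> nth x s i != x.
  move=> i hi; have : nth x s i \in s by apply: mem_nth; rewrite ss.
  by rewrite /s mem_enum !inE.
pose a i j := e (nth x s i) (nth x s j).
have sa : forall i j, a i j = a j i by move=> i j; rewrite /a sym.
have md : mindegR (nrm a).
  apply/allP => i; rewrite mem_iota => /andP [_ ilt].
  pose v := nth x s i.
  have -> : count (nrm a i) (iota 0 6) = count (e v) s.
    rewrite -(mkseq_nth x s) ss /mkseq count_map.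
    apply: eq_in_count => j; rewrite mem_iota => /andP [_ jlt].
    rewrite add0n in jlt; rewrite add0n in ilt; rewrite /nrm /a /=.
    case: (eqVneq i j) => [<-|_] //=.
    by rewrite ilt jlt.
  have : [set y | e v y] :\ x \subset filter (e v) s.
    apply/subsetP => y; rewrite !inE mem_filter => /andP [ny ey].
    by rewrite ey /s mem_enum !inE ny.
  move/subset_leq_card => h1.
  have h2 := leq_trans h1 (card_size _); rewrite size_filter in h2.
  have h3 := cardsD1 x [set y | e v y].
  have h4 := leq_b1 (x \in [set y | e v y]).
  have := d4 v; rewrite /degree; lia.
have := @key6 a sa md; rewrite /hamR => /hasP [c cin cok].
have cu : all uniq cycs by vm_compute.
have uc := allP cu _ cin.
move: cok uc; case: c {cin} => [|c0 [|c1 [|c2 [|c3 [|c4 [|c5 [|? ?]]]]]]] //=.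
rewrite /nrm => /and5P [/and4P [_ l0 l1 e01] /and4P [_ _ l2 e12]
  /and4P [_ _ l3 e23] /and4P [_ _ l4 e34] /andP [/and4P [_ _ l5 e45]
  /and4P [_ _ _ e50]]] uc.
rewrite /a in e01 e12 e23 e34 e45 e50.
have N0 := ns _ l0. have N1 := ns _ l1. have N2 := ns _ l2.
have N3 := ns _ l3. have N4 := ns _ l4. have N5 := ns _ l5.
pose cc := [:: c0; c1; c2; c3; c4; c5].
pose rep (k : 'I_7) := if val k is n.+1 then nth x s (nth 0 cc n) else x.
have ccl : forall n, n < 6 -> nth 0 cc n < 6.
  by case=> [|[|[|[|[|[|n]]]]]] //=.
have rinj : injective rep.
  move=> [[|n] hn] [[|m] hm]; rewrite /rep /=.
  - by move=> _; apply: val_inj.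
  - by move=> h; have := ns _ (ccl m hm); rewrite -h eqxx.
  - by move=> h; have := ns _ (ccl n hn); rewrite h eqxx.
  move/eqP; rewrite nth_uniq ?ss ?ccl // => /eqP.
  move/eqP; rewrite nth_uniq // => /eqP eq; by apply: val_inj => /=; rewrite eq.
have redge : forall t u, wheel6 t u -> e (rep t) (rep u).
  move=> t u; rewrite /wheel6 -val_eqE.
  case: t => [[|[|[|[|[|[|[|t]]]]]]] ht] //;
  case: u => [[|[|[|[|[|[|[|u]]]]]]] hu] //; rewrite /rep /= => // _;
  first [done | by rewrite hx | by rewrite sym hx | by rewrite sym].
rewrite /has_minor.
exists (fun k : 'I_7 => [set rep k]); split.
- by move=> k; apply/set0Pn; exists (rep k); rewrite inE.
- by move=> k1 k2 ne; rewrite disjoints1 inE; apply: contra ne => /eqP/rinj ->.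
- by move=> k y z; rewrite !inE => /eqP -> /eqP ->; exact: connect0.
- move=> k1 k2 w; exists (rep k1), (rep k2); rewrite !inE !eqxx; split => //.
  exact: redge.
Qed.

Theorem lemma4p4 (T : finType) (e : rel T) :
  symmetric e -> irreflexive e -> #|T| = 7 -> k_connected e 4 ->
  (~ has_minor e wheel6 <-> ~ (exists x : T, degree e x = 6)).
Proof.
move=> sym irr card7 kc; split.
- move=> nM [x dx]; apply: nM.
  exact: (@deg6_minor _ _ sym irr card7 (@min_deg4 _ _ irr card7 kc) x dx).
- by move=> nD M; apply: nD; exact: (@minor_deg6 _ _ irr card7 M).
Qed.
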